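(* Let $X$ be a Dedekind complete Riesz space with weak order unit $e$ and conditional expectation operator $T$ with $Te=e$. If $(x_{\alpha})$ is a decreasing net in $X_{+}$ that converges to $0$ in $T$-conditional probability, then $x_{\alpha}\downarrow0$.
   Context: A conditional expectation operator on $X$ is a strictly positive, order continuous linear projection $T$ with $Te=e$ whose range is a Dedekind complete Riesz subspace. $x_\alpha\to 0$ in $T$-conditional probability means that for every $\epsilon>0$ the net $TP_{(|x_\alpha|-\epsilon e)^{+}}e$ order converges to $0$, where $P_y$ is the band projection onto the band generated by $y$; order convergence $y_\alpha\to 0$ means $|y_\alpha|$ is eventually dominated by the terms of some net decreasing to $0$. *)

(* Defs.v *)
From HB Require Import structures.
From mathcomp Require Import all_boot all_order all_algebra.
From mathcomp Require Import reals.
From Stdlib Require Import ClassicalEpsilon.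

Set Implicit Arguments.
Unset Strict Implicit.
Unset Printing Implicit Defensive.
Import GRing.Theory Num.Theory.
Local Open Scope ring_scope.

Section Riesz.
Variables (R : realType) (X : lmodType R)
  (le : X -> X -> Prop) (join : X -> X -> X).

Definition riesz_space : Prop :=
  (forall x, le x x) /\
  (forall x y, le x y -> le y x -> x = y) /\
  (forall x y z, le x y -> le y z -> le x z) /\
  (forall x y z, le x y -> le (x + z) (y + z)) /\
  (forall (a : R) x y, 0 <= a -> le x y -> le (a *: x) (a *: y)) /\
  (forall x y, [/\ le x (join x y), le y (join x y) &
                forall z, le x z -> le y z -> le (join x y) z]).

Definition meetr (x y : X) : X := - join (- x) (- y).
Definition absr (x : X) : X := join x (- x).
Definition posp (x : X) : X := join x 0.

Definition is_ub (A : X -> Prop) (u : X) := forall a, A a -> le a u.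
Definition is_lb (A : X -> Prop) (u : X) := forall a, A a -> le u a.
Definition is_sup (A : X -> Prop) (s : X) :=
  is_ub A s /\ forall u, is_ub A u -> le s u.
Definition is_inf (A : X -> Prop) (s : X) :=
  is_lb A s /\ forall u, is_lb A u -> le u s.

Definition dedekind_complete : Prop :=
  forall A : X -> Prop, (exists a, A a) -> (exists u, is_ub A u) ->
    exists s, is_sup A s.

Definition disjoint (x y : X) := meetr (absr x) (absr y) = 0.

Definition ideal (A : X -> Prop) : Prop :=
  [/\ A 0, (forall x y, A x -> A y -> A (x + y)),
      (forall (a : R) x, A x -> A (a *: x)) &
      (forall x y, A x -> le (absr y) (absr x) -> A y)].

Definition band (A : X -> Prop) : Prop :=
  ideal A /\
  forall (S : X -> Prop) s, (forall x, S x -> A x) -> is_sup S s -> A s.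

Definition band_gen (y : X) : X -> Prop :=
  fun x => forall B, band B -> B y -> B x.

Definition disj_compl (A : X -> Prop) : X -> Prop :=
  fun x => forall y, A y -> disjoint x y.

(* P_y x : the band projection of x onto the band generated by y
   (exists and is unique in a Dedekind complete Riesz space) *)
Definition band_proj (y x : X) : X :=
  epsilon (inhabits 0)
    (fun p => band_gen y p /\ disj_compl (band_gen y) (x - p)).

Definition weak_unit (e : X) : Prop := le 0 e /\ forall x, band_gen e x.

Definition directed (I : Type) (leI : I -> I -> Prop) : Prop :=
  [/\ (exists i : I, True), (forall i, leI i i),
      (forall i j k, leI i j -> leI j k -> leI i k) &
      (forall i j, exists k, leI i k /\ leI j k)].

Definition decr_to0 (J : Type) (leJ : J -> J -> Prop) (z : J -> X) : Prop :=
  (forall b1 b2, leJ b1 b2 -> le (z b2) (z b1)) /\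
  is_inf (fun w => exists b, z b = w) 0.

Definition order_conv0 (I : Type) (leI : I -> I -> Prop) (y : I -> X) : Prop :=
  exists (J : Type) (leJ : J -> J -> Prop) (z : J -> X),
    [/\ directed leJ, decr_to0 leJ z &
        forall b, exists a0, forall a, leI a0 a -> le (absr (y a)) (z b)].

Definition order_continuous (T : X -> X) : Prop :=
  forall (I : Type) (leI : I -> I -> Prop) (y : I -> X),
    directed leI -> order_conv0 leI y -> order_conv0 leI (fun a => T (y a)).

Definition strictly_positive (T : X -> X) : Prop :=
  forall x, le 0 x -> x <> 0 -> le 0 (T x) /\ T x <> 0.

Definition dc_riesz_subspace (A : X -> Prop) : Prop :=
  [/\ A 0, (forall x y, A x -> A y -> A (x + y)),
      (forall (a : R) x, A x -> A (a *: x)),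
      (forall x y, A x -> A y -> A (join x y)) &
      (forall S : X -> Prop, (exists a, S a) -> (forall x, S x -> A x) ->
         (exists u, A u /\ is_ub S u) ->
         exists s, [/\ A s, is_ub S s & forall u, A u -> is_ub S u -> le s u])].

Definition cond_exp (T : {linear X -> X}) (e : X) : Prop :=
  [/\ strictly_positive T, order_continuous T,
      (forall x, T (T x) = T x), T e = e &
      dc_riesz_subspace (fun y => exists x, T x = y)].

Definition cond_prob_conv0 (T : {linear X -> X}) (e : X)
  (I : Type) (leI : I -> I -> Prop) (x : I -> X) : Prop :=
  forall eps : R, 0 < eps ->
    order_conv0 leI (fun a => T (band_proj (posp (absr (x a) - eps *: e)) e)).

End Riesz.

(* Main.v *)
Require Import Defs.
From mathcomp Require Import all_boot all_order all_algebra.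
From mathcomp Require Import reals.
From Stdlib Require Import ClassicalEpsilon Classical.

Set Implicit Arguments.
Unset Strict Implicit.
Unset Printing Implicit Defensive.
Import Order.TTheory GRing.Theory Num.Theory.
Local Open Scope ring_scope.

Section RT.
Variables (R : realType) (X : lmodType R) (le : X -> X -> Prop) (join : X -> X -> X).
Hypothesis HR : riesz_space le join.

Local Notation meet := (meetr join).
Local Notation abs := (absr join).

Lemma lerefl x : le x x. Proof. by case: HR. Qed.
Lemma leanti x y : le x y -> le y x -> x = y. Proof. by case: HR => _ [h _]; apply: h. Qed.
Lemma letr x y z : le x y -> le y z -> le x z. Proof. by case: HR => _ [_ [h _]]; apply: h. Qed.
Lemma leaddr x y z : le x y -> le (x + z) (y + z). Proof. by case: HR => _ [_ [_ [h _]]]; apply: h. Qed.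
Lemma lescale (a : R) x y : 0 <= a -> le x y -> le (a *: x) (a *: y).
Proof. by case: HR => _ [_ [_ [_ [h _]]]]; apply: h. Qed.
Lemma joinl x y : le x (join x y). Proof. by case: HR => _ [_ [_ [_ [_ H]]]]; case: (H x y). Qed.
Lemma joinr x y : le y (join x y). Proof. by case: HR => _ [_ [_ [_ [_ H]]]]; case: (H x y). Qed.
Lemma joinL x y z : le x z -> le y z -> le (join x y) z.
Proof. move=> h1 h2; case: HR => _ [_ [_ [_ [_ H]]]]; case: (H x y) => _ _ c; exact: c. Qed.

Lemma leaddl x y z : le x y -> le (z + x) (z + y).
Proof. by move=> h; rewrite ![z + _]addrC; apply: leaddr. Qed.
Lemma leadd a b c d : le a b -> le c d -> le (a + c) (b + d).
Proof. move=> h1 h2; apply: letr (leaddr c h1) (leaddl b h2). Qed.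
Lemma lesub0 x y : le x y -> le 0 (y - x).
Proof. by move=> h; have := leaddr (- x) h; rewrite subrr. Qed.
Lemma lesub0' x y : le 0 (y - x) -> le x y.
Proof. by move=> h; have := leaddr x h; rewrite add0r subrK. Qed.
Lemma leopp x y : le x y -> le (- y) (- x).
Proof.
move=> h; have := leaddr (- x - y) h.
have -> : x + (- x - y) = - y by rewrite addrA subrr add0r.
by have -> : y + (- x - y) = - x by rewrite addrC subrK.
Qed.
Lemma leopp' x y : le (- y) (- x) -> le x y.
Proof. by move=> /leopp; rewrite !opprK. Qed.

Lemma joinC x y : join x y = join y x.
Proof. by apply: leanti; apply: joinL; [apply: joinr|apply: joinl|apply: joinr|apply: joinl]. Qed.
Lemma joinid x : join x x = x.
Proof. apply: leanti; [by apply: joinL; apply: lerefl | exact: joinl]. Qed.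
Lemma joinmono x x' y : le x x' -> le (join x y) (join x' y).
Proof. move=> h; apply: joinL; [exact: letr h (joinl _ _)|exact: joinr]. Qed.

Lemma meetl x y : le (meet x y) x.
Proof. by apply: leopp'; rewrite /meetr opprK; apply: joinl. Qed.
Lemma meetr_le x y : le (meet x y) y.
Proof. by apply: leopp'; rewrite /meetr opprK; apply: joinr. Qed.
Lemma meetG x y z : le z x -> le z y -> le z (meet x y).
Proof.
move=> h1 h2; apply: leopp'; rewrite /meetr opprK.
by apply: joinL; apply: leopp.
Qed.
Lemma meetC x y : meet x y = meet y x.
Proof. by rewrite /meetr joinC. Qed.
Lemma meetid x : meet x x = x.
Proof. by rewrite /meetr joinid opprK. Qed.
Lemma meetmono x x' y : le x x' -> le (meet x y) (meet x' y).
Proof. move=> h; apply: meetG; [exact: letr (meetl _ _) h|exact: meetr_le]. Qed.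
Lemma meetmonor x y y' : le y y' -> le (meet x y) (meet x y').
Proof. by move=> h; rewrite ![meet x _]meetC; apply: meetmono. Qed.

Lemma joinD x y z : join x y + z = join (x + z) (y + z).
Proof.
apply: leanti.
  suff h : le (join x y) (join (x + z) (y + z) - z).
    by have := leaddr z h; rewrite subrK.
  apply: joinL.
    by have := leaddr (- z) (joinl (x + z) (y + z)); rewrite addrK.
  by have := leaddr (- z) (joinr (x + z) (y + z)); rewrite addrK.
by apply: joinL; apply: leaddr; [apply: joinl|apply: joinr].
Qed.
Lemma meetD x y z : meet x y + z = meet (x + z) (y + z).
Proof.
by rewrite /meetr !opprD -joinD opprD opprK.
Qed.
Lemma join_meet x y : join x y + meet x y = x + y.
Proof.
rewrite /meetr.
have h : join (- x) (- y) + (x + y) = join x y.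
  by rewrite joinD addrA addNr add0r addrCA addNr addr0 joinC.
by rewrite -h addrAC subrr add0r.
Qed.

Lemma scale_le1 (t : R) y : 0 <= t <= 1 -> le 0 y -> le (t *: y) y.
Proof.
case/andP=> t0 t1 hy; apply: lesub0'.
have -> : y - t *: y = (1 - t) *: y by rewrite scalerBl scale1r.
by have := @lescale (1 - t) 0 y; rewrite scaler0; apply; rewrite ?subr_ge0.
Qed.

Lemma abs_ge0 x : le 0 (abs x).
Proof.
have h : le (x + - x) (abs x + abs x) by apply: leadd; [apply: joinl|apply: joinr].
rewrite subrr in h.
have h2 : (0:R) <= 2^-1 by rewrite invr_ge0.
have := lescale h2 h.
by rewrite scaler0 -[abs x]scale1r -scalerDl scalerA mulVf ?scale1r // pnatr_eq0.
Qed.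
Lemma abs_id x : le 0 x -> abs x = x.
Proof.
move=> h; apply: leanti; last exact: joinl.
apply: joinL; first exact: lerefl.
by apply: (letr _ h); have := leopp h; rewrite oppr0.
Qed.
Lemma absN x : abs (- x) = abs x.
Proof. by rewrite /absr opprK joinC. Qed.
Lemma le_abs x : le x (abs x). Proof. exact: joinl. Qed.
Lemma leN_abs x : le (- x) (abs x). Proof. exact: joinr. Qed.
Lemma meet_ge0 a b : le 0 a -> le 0 b -> le 0 (meet a b).
Proof. by move=> *; apply: meetG. Qed.
Lemma meet0 a b : le 0 a -> le 0 b -> le (meet a b) 0 -> meet a b = 0.
Proof. by move=> ha hb h; apply: leanti => //; apply: meet_ge0. Qed.
Lemma pos_ge0 x : le 0 (posp join x). Proof. exact: joinr. Qed.
Lemma pos_le_abs x : le (posp join x) (abs x).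
Proof. apply: joinL; [exact: le_abs|exact: abs_ge0]. Qed.
Lemma abs_add x y : le (abs (x + y)) (abs x + abs y).
Proof.
apply: joinL; first by apply: leadd; apply: le_abs.
by rewrite opprD; apply: leadd; apply: leN_abs.
Qed.
Lemma abs0 : abs 0 = 0. Proof. by apply: abs_id; apply: lerefl. Qed.


Lemma disj_sum a b c : le 0 a -> le 0 b -> le 0 c ->
  meet a c = 0 -> meet b c = 0 -> meet (a + b) c = 0.
Proof.
move=> ha hb hc hac hbc; apply: meet0 => //.
  by rewrite -[0]addr0; apply: leadd.
have h1 : le (meet (a + b) c) (meet (a + b) (c + b)).
  apply: meetmonor; rewrite -{1}[c]addr0; exact: leaddl.
rewrite -meetD hac add0r in h1.
by rewrite -hbc; apply: meetG => //; apply: meetr_le.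
Qed.

Lemma abs_scale (a : R) x : le (abs (a *: x)) (`|a| *: abs x).
Proof.
case: (lerP 0 a) => ha.
  rewrite ger0_norm //; apply: joinL; first by apply: lescale => //; apply: le_abs.
  by rewrite -scalerN; apply: lescale => //; apply: leN_abs.
rewrite ltr0_norm //; have ha' : 0 <= - a by rewrite oppr_ge0 ltW.
apply: joinL.
  by rewrite -[a *: x]opprK -scaleNr -scalerN; apply: lescale => //; apply: leN_abs.
by rewrite -scaleNr; apply: lescale => //; apply: le_abs.
Qed.

Definition Dj w := fun y => meet (abs y) (abs w) = 0.

Lemma Dj0 w : Dj w 0.
Proof.
rewrite /Dj abs0; apply: meet0; [exact: lerefl|exact: abs_ge0|exact: meetl].
Qed.

Lemma Dj_band w : band le join (Dj w).
Proof.
have hW := abs_ge0 w.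
split; first split.
- exact: Dj0.
- move=> x y; rewrite /Dj => hx hy; apply: meet0; [exact: abs_ge0|exact: hW|].
  apply: letr (meetmono _ (abs_add x y)) _.
  by rewrite disj_sum ?hx ?hy //; [apply: lerefl|apply: abs_ge0|apply: abs_ge0].
- move=> a x; rewrite /Dj => hx; apply: meet0; [exact: abs_ge0|exact: hW|].
  apply: letr (meetmono _ (abs_scale a x)) _.
  set m := meet _ _.
  set k : R := `|a| + 1.
  have k0 : 0 < k by rewrite /k ltr_wpDl.
  have k1 : 1 <= k by rewrite /k lerDr.
  have hki : 0 <= k^-1 <= 1 by rewrite invr_ge0 ltW //= invf_le1.
  have hm1 : le (k^-1 *: m) (abs x).
    apply: letr (lescale _ (meetl _ _)) _; first by case/andP: hki.
    rewrite scalerA; apply: scale_le1; last exact: abs_ge0.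
    rewrite mulr_ge0 ?invr_ge0 ?normr_ge0 ?(ltW k0) //=.
    by rewrite mulrC ler_pdivrMr // mul1r /k lerDl ler01.
  have hm2 : le (k^-1 *: m) (abs w).
    apply: letr (lescale _ (meetr_le _ _)) _; first by case/andP: hki.
    exact: scale_le1.
  have hm3 : le (k^-1 *: m) 0.
    by rewrite -hx; apply: meetG; [exact: hm1|exact: hm2].
  have := @lescale k _ _ (ltW k0) hm3.
  by rewrite scalerA mulfV ?scale1r ?scaler0 // gt_eqF.
- move=> x y; rewrite /Dj => hx hle; apply: meet0; [exact: abs_ge0|exact: hW|].
  by rewrite -hx; apply: meetmono.
move=> S s; rewrite /Dj => hS [hub hl].
case: (classic (exists y, S y)) => [[y0 hy0]|hne]; last first.
  have hs0 : le s 0 by apply: hl => y hy; case: hne; exists y.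
  have hs1 : le s (s + s) by apply: hl => y hy; case: hne; exists y.
  have hs2 : le 0 s by have := leaddr (- s) hs1; rewrite subrr addrK.
  by rewrite (leanti hs0 hs2); apply: Dj0.
set W := abs w.
set sp := join s 0; set sn := join (- s) 0.
have hsp0 : le 0 sp by apply: joinr.
have hsn0 : le 0 sn by apply: joinr.
have habs : le (abs s) (sp + sn).
  apply: joinL.
    by rewrite -[s]addr0; apply: leadd; [apply: joinl|apply: joinr].
  by rewrite -[- s]add0r; apply: leadd; [apply: joinr|apply: joinl].
have hsn : meet sn W = 0.
  apply: meet0 => //.
  rewrite -(hS y0 hy0); apply: meetmono; apply: joinL; last exact: abs_ge0.
  apply: letr (leopp (hub y0 hy0)) _; exact: leN_abs.
have hsp : meet sp W = 0.
  set J := join sp W.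
  have hJ : le s (J - W).
    apply: hl => y hy.
    set yp := join y 0.
    have hyp : meet yp W = 0.
      apply: meet0; [exact: joinr|exact: hW|].
      by rewrite -(hS y hy); apply: meetmono; apply: pos_le_abs.
    have hjm := join_meet yp W; rewrite hyp addr0 in hjm.
    have -> : y = y + W - W by rewrite addrK.
    apply: leaddr; apply: letr (leaddr W (joinl y 0)) _.
    rewrite -/yp -hjm; apply: joinmono; apply: joinmono; exact: hub.
  have hsp1 : le sp (J - W).
    apply: joinL => //; apply: lesub0; exact: joinr.
  have hsp2 : le (sp + W) J by have := leaddr W hsp1; rewrite subrK.
  apply: meet0 => //.
  rewrite -(join_meet sp W) -/J in hsp2.
  by have := leaddr (- J) hsp2; rewrite subrr addrC addKr.
apply: meet0; [exact: abs_ge0|exact: hW|].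
rewrite -(disj_sum hsp0 hsn0 hW hsp hsn); exact: meetmono.
Qed.


Local Notation bg := (band_gen le join).

Lemma bg_band y : band le join (bg y).
Proof.
split; first split.
- by move=> B [[h0 _ _ _] _] _.
- move=> a b ha hb B hB hy; have [[_ hadd _ _] _] := hB.
  by apply: hadd; [apply: ha|apply: hb].
- move=> c a ha B hB hy; have [[_ _ hsc _] _] := hB.
  by apply: hsc; apply: ha.
- move=> a b ha hab B hB hy; have [[_ _ _ hsol] _] := hB.
  by apply: (hsol a) => //; apply: ha.
move=> S s hS hsup B hB hy; have [_ hcl] := hB.
by apply: (hcl S) => // z hz; apply: hS.
Qed.

Lemma bg_self y : bg y y.
Proof. by move=> B. Qed.

Lemma proj_exists (DC : dedekind_complete le) p e : le 0 p -> le 0 e ->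
  exists P, bg p P /\ disj_compl join (bg p) (e - P).
Proof.
move=> hp he.
set S := fun z => exists n : nat, z = meet e (n%:R *: p).
have hS0 : exists a, S a by exists (meet e (0%:R *: p)); exists 0%N.
have hub : exists u, is_ub le S u by exists e => z [n ->]; apply: meetl.
have [s [hsub hsl]] := DC S hS0 hub.
have hnp n : le 0 (n%:R *: p).
  by have := @lescale n%:R 0 p (ler0n _ _) hp; rewrite scaler0.
have hse : le s e by apply: hsl => z [n ->]; apply: meetl.
exists s; split.
  have [_ hcl] := bg_band p.
  apply: (hcl S s); last by split.
  move=> z [n ->].
  have [[_ _ hsc hsol] _] := bg_band p.
  apply: (hsol (n%:R *: p)); first by apply: hsc; apply: bg_self.
  rewrite !abs_id //; [exact: meetr_le|exact: meet_ge0].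
move=> y hy; rewrite /Defs.disjoint meetC.
have hd : le 0 (e - s) by apply: lesub0.
suff hDp : Dj (e - s) p.
  have := hy (Dj (e - s)) (Dj_band (e - s)) hDp; done.
rewrite /Dj !abs_id //.
set t := meet p (e - s).
apply: meet0 => //.
have key n : le (meet e (n%:R *: p) + t) s.
  apply: letr _ (hsub _ (ex_intro _ n.+1 erefl)).
  apply: meetG.
    have := leadd (hsub _ (ex_intro _ n erefl)) (meetr_le p (e - s)).
    by rewrite [s + _]addrC subrK.
  have := leadd (meetr_le e (n%:R *: p)) (meetl p (e - s)).
  by rewrite mulrSr scalerDl scale1r.
have hst : le s (s - t).
  apply: hsl => z [n ->].
  by have := leaddr (- t) (key n); rewrite addrK.
have := leaddr (t - s) hst.
have -> : s + (t - s) = t by rewrite addrC subrK.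
by have -> : s - t + (t - s) = 0 by rewrite addrA subrK subrr.
Qed.

Lemma proj_spec (DC : dedekind_complete le) p e : le 0 p -> le 0 e ->
  bg p (band_proj le join p e) /\ disj_compl join (bg p) (e - band_proj le join p e).
Proof.
move=> hp he; rewrite /band_proj.
have [P hP] := proj_exists DC hp he.
exact: (@epsilon_spec X (inhabits 0) (fun P => bg p P /\ disj_compl join (bg p) (e - P)) (ex_intro _ P hP)).
Qed.

Lemma le_proj p P q e : bg p P -> disj_compl join (bg p) (e - P) ->
  bg p q -> le q e -> le q P.
Proof.
move=> hP hdis hq hqe.
have [[_ hadd hsc _] _] := bg_band p.
have hr : bg p (q - P).
  apply: hadd => //; rewrite -scaleN1r; exact: hsc.
have hd := hdis _ hr; rewrite /Defs.disjoint in hd.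
have h1 : le (join (q - P) 0) (meet (abs (e - P)) (abs (q - P))).
  apply: meetG; last exact: pos_le_abs.
  apply: joinL; last exact: abs_ge0.
  apply: letr (le_abs _); exact: leaddr.
rewrite hd in h1.
have h2 := letr (joinl _ _) h1.
by have := leaddr P h2; rewrite subrK add0r.
Qed.

Lemma Tpos (T : {linear X -> X}) x : strictly_positive le T -> le 0 x -> le 0 (T x).
Proof.
move=> hT hx; case: (classic (x = 0)) => [->|hne]; last by case: (hT x hx hne).
by rewrite linear0; apply: lerefl.
Qed.

Lemma Tmono (T : {linear X -> X}) x y : strictly_positive le T -> le x y -> le (T x) (T y).
Proof.
move=> hT hxy; apply: lesub0'; rewrite -linearB; apply: Tpos => //; exact: lesub0.
Qed.

Lemma arch (DC : dedekind_complete le) e v : le 0 v ->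
  (forall eps : R, 0 < eps -> le v (eps *: e)) -> le v 0.
Proof.
move=> hv hle.
set S := fun z => exists n : nat, z = n%:R *: v.
have hS0 : exists a, S a by exists (0%:R *: v); exists 0%N.
have hSn n : n.+1%:R *: v = n%:R *: v + v by rewrite mulrSr scalerDl scale1r.
have hub : exists u, is_ub le S u.
  exists e => z [n ->].
  have hn0 : (0 : R) < n.+1%:R by rewrite ltr0Sn.
  have h1 : le (n%:R *: v) (n.+1%:R *: v).
    by rewrite hSn -{1}[n%:R *: v]addr0; apply: leaddl.
  apply: letr h1 _.
  have hi : (0:R) < n.+1%:R^-1 by rewrite invr_gt0.
  have := @lescale n.+1%:R _ _ (ltW hn0) (hle _ hi).
  by rewrite scalerA mulfV ?scale1r // gt_eqF.
have [s [hsub hsl]] := DC S hS0 hub.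
have hst : le s (s - v).
  apply: hsl => z [n ->].
  have := leaddr (- v) (hsub _ (ex_intro _ n.+1 erefl)).
  by rewrite hSn addrK.
have := leaddr (v - s) hst.
have -> : s + (v - s) = v by rewrite addrC subrK.
by have -> : s - v + (v - s) = 0 by rewrite addrA subrK subrr.
Qed.

Variables (e : X) (T : {linear X -> X}) (I : Type) (leI : I -> I -> Prop) (x : I -> X).
Hypotheses (DC : dedekind_complete le) (WU : weak_unit le join e)
  (CE : cond_exp le join T e) (Hdir : directed leI) (Hx0 : forall a, le 0 (x a))
  (Hconv : cond_prob_conv0 le join T e leI x).

Lemma main_inf : is_inf le (fun w => exists a, x a = w) 0.
Proof.
have [He0 Hwu] := WU.
have [Tsp _ _ _ _] := CE.
have [_ Hrefl _ _] := Hdir.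
split; first by move=> _ [a <-]; exact: Hx0.
move=> u Hu.
set v := join u 0.
have hv0 : le 0 v := joinr _ _.
have hvx a : le v (x a) := joinL (Hu _ (ex_intro _ a erefl)) (Hx0 a).
apply: letr (joinl u 0) _.
apply: (arch DC (e := e) hv0) => eps heps.
set w := posp join (v - eps *: e).
have hw0 : le 0 w := pos_ge0 _.
set q := meet w e.
have hq0 : le 0 q := meet_ge0 hw0 He0.
have hqe : le q e := meetr_le _ _.
have hTq : le (T q) 0.
  have [J [leJ [z [_ [_ [_ hinf]] hev]]]] := Hconv heps.
  apply: hinf => _ [b <-].
  have [a0 ha0] := hev b.
  have h := ha0 a0 (Hrefl a0).
  have hp0 : le 0 (posp join (absr join (x a0) - eps *: e)) := pos_ge0 _.
  have [hP1 hP2] := proj_spec DC hp0 He0.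
  apply: letr h; apply: letr (le_abs _); apply: Tmono => //.
  apply: le_proj hP1 hP2 _ hqe.
  have [[_ _ _ hsol] _] := bg_band (posp join (absr join (x a0) - eps *: e)).
  apply: hsol; first exact: bg_self.
  rewrite (abs_id hq0) (abs_id hp0).
  apply: letr (meetl _ _) _.
  rewrite /w (abs_id (Hx0 a0)); apply: joinmono; apply: leaddr; exact: hvx.
have hTq0 : T q = 0 := leanti hTq (Tpos Tsp hq0).
have hq : q = 0.
  case: (classic (q = 0)) => // hne.
  by have [_] := Tsp q hq0 hne.
have hw : w = 0.
  have hD : Dj w e by rewrite /Dj (abs_id He0) (abs_id hw0) meetC.
  have := Hwu w (Dj w) (Dj_band w) hD.
  by rewrite /Dj meetid (abs_id hw0).
have h : le (v - eps *: e) 0 by rewrite -hw; apply: joinl.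
by have := leaddr (eps *: e) h; rewrite subrK add0r.
Qed.

End RT.

Theorem lemmaS12 (R : realType) (X : lmodType R)
  (le : X -> X -> Prop) (join : X -> X -> X)
  (e : X) (T : {linear X -> X})
  (I : Type) (leI : I -> I -> Prop) (x : I -> X) :
  riesz_space le join ->
  dedekind_complete le ->
  weak_unit le join e ->
  cond_exp le join T e ->
  directed leI ->
  (forall a, le 0%R (x a)) ->
  (forall a b, leI a b -> le (x b) (x a)) ->
  cond_prob_conv0 le join T e leI x ->
  is_inf le (fun w => exists a, x a = w) 0%R.
Proof.
move=> HR DC WU CE Hdir Hx0 _ Hconv.
exact: (main_inf HR DC WU CE Hdir Hx0 Hconv).
Qed.
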